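(* Let $(X,d)$ be a compact metric space and let $f:X\to X$ be an arbitrary map (no continuity assumed). If $(C_k)_{k\in\mathbb{N}}$ is a sequence of chain components in $\mathfrak{C}_f$ such that $C_{k+1}\prec C_k$ for every $k$, then there is a chain component $C\in\mathfrak{C}_f$ with $C\prec C_k$ for every $k\in\mathbb{N}$.
   Context: For a metric space $(X,d)$ and map $f:X\to X$: an $\varepsilon$-chain from $x$ to $y$ is a finite sequence $x_0=x,\dots,x_n=y$, $n\ge1$, with $d(f(x_i),x_{i+1})<\varepsilon$; $x\,\mathcal{C}\,y$ iff for every $\varepsilon>0$ there is an $\varepsilon$-chain from $x$ to $y$; $CR_f=\{x:x\,\mathcal{C}\,x\}$; $x\,E\,y$ iff $x\,\mathcal{C}\,y$ and $y\,\mathcal{C}\,x$; $\mathfrak{C}_f=CR_f/E$ is the set of chain components, partially ordered by $[x]\preceq[y]$ iff $y\,\mathcal{C}\,x$; $\prec$ denotes $\preceq$ together with $\neq$. *)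

(* Defs.v *)
From Stdlib Require Import Reals List.
Open Scope R_scope.

Definition is_metric {X : Type} (d : X -> X -> R) : Prop :=
  (forall x y, 0 <= d x y) /\
  (forall x y, d x y = 0 <-> x = y) /\
  (forall x y, d x y = d y x) /\
  (forall x y z, d x z <= d x y + d y z).

Definition metric_open {X : Type} (d : X -> X -> R) (U : X -> Prop) : Prop :=
  forall x, U x -> exists r, 0 < r /\ forall y, d x y < r -> U y.

Definition metric_compact {X : Type} (d : X -> X -> R) : Prop :=
  forall (I : Type) (U : I -> X -> Prop),
    (forall i, metric_open d (U i)) ->
    (forall x, exists i, U i x) ->
    exists l : list I, forall x, exists i, In i l /\ U i x.

Definition eps_chain {X : Type} (d : X -> X -> R) (f : X -> X)
    (eps : R) (x y : X) : Prop :=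
  exists (n : nat) (s : nat -> X),
    (1 <= n)%nat /\ s 0%nat = x /\ s n = y /\
    forall i, (i < n)%nat -> d (f (s i)) (s (S i)) < eps.

Definition chain_rel {X : Type} (d : X -> X -> R) (f : X -> X) (x y : X) : Prop :=
  forall eps, 0 < eps -> eps_chain d f eps x y.

Definition chain_recurrent {X : Type} (d : X -> X -> R) (f : X -> X) (x : X) : Prop :=
  chain_rel d f x x.

Definition chain_equiv {X : Type} (d : X -> X -> R) (f : X -> X) (x y : X) : Prop :=
  chain_rel d f x y /\ chain_rel d f y x.

Definition chain_component {X : Type} (d : X -> X -> R) (f : X -> X)
    (C : X -> Prop) : Prop :=
  exists x, chain_recurrent d f x /\
    forall y, C y <-> (chain_recurrent d f y /\ chain_equiv d f x y).

(* [x] <= [y] iff y C x (stated on representatives). *)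
Definition comp_le {X : Type} (d : X -> X -> R) (f : X -> X)
    (C D : X -> Prop) : Prop :=
  exists x y, C x /\ D y /\ chain_rel d f y x.

Definition comp_lt {X : Type} (d : X -> X -> R) (f : X -> X)
    (C D : X -> Prop) : Prop :=
  comp_le d f C D /\ C <> D.

(* Main.v *)
Require Import Defs.
From Stdlib Require Import Reals Lra Lia List Classical ClassicalEpsilon FunctionalExtensionality PropExtensionality.
From Stdlib Require Cantor.
Open Scope R_scope.

Lemma cr_step {X} (d : X -> X -> R) f (Hd : is_metric d) x : chain_rel d f x (f x).
Proof.
  destruct Hd as [H0 [H1 _]].
  intros e He. exists 1%nat, (fun i => if Nat.eqb i 0 then x else f x).
  repeat split; auto. intros i Hi. replace i with 0%nat by lia. simpl.
  assert (d (f x) (f x) = 0) by (apply H1; auto). lra.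
Qed.

Lemma cr_trans {X} (d : X -> X -> R) f x y z :
  chain_rel d f x y -> chain_rel d f y z -> chain_rel d f x z.
Proof.
  intros A B e He. destruct (A e He) as [n1 [s1 [Hn1 [H10 [H1n H1s]]]]].
  destruct (B e He) as [n2 [s2 [Hn2 [H20 [H2n H2s]]]]].
  exists (n1 + n2)%nat, (fun i => if Nat.leb i n1 then s1 i else s2 (i - n1)%nat).
  split; [lia|]. split; [simpl; auto|]. split.
  - destruct (Nat.leb_spec (n1+n2) n1); [lia|]. replace (n1+n2-n1)%nat with n2 by lia; auto.
  - intros i Hi. destruct (Nat.leb_spec i n1); destruct (Nat.leb_spec (S i) n1).
    + apply H1s; lia.
    + assert (i = n1) by lia. subst i. replace (S n1 - n1)%nat with 1%nat by lia.
      rewrite H1n, <- H20. apply H2s; lia.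
    + lia.
    + replace (S i - n1)%nat with (S (i - n1)) by lia. apply H2s; lia.
Qed.

Lemma cr_closed {X} (d : X -> X -> R) f (Hd : is_metric d) y w :
  (forall r, 0 < r -> exists w', d w w' < r /\ chain_rel d f y w') -> chain_rel d f y w.
Proof.
  destruct Hd as [Hpos [H1 [Hsym Htri]]].
  intros H e He. destruct (H (e/2)) as [w' [Hw' Hc]]; [lra|].
  destruct (Hc (e/2)) as [n [s [Hn [H0 [Hsn Hs]]]]]; [lra|].
  exists n, (fun i => if Nat.eqb i n then w else s i). split; auto. split.
  - destruct (Nat.eqb_spec 0 n); [lia|auto].
  - split. rewrite Nat.eqb_refl; auto.
    intros i Hi. destruct (Nat.eqb_spec i n); [lia|]. destruct (Nat.eqb_spec (S i) n).
    + specialize (Hs i Hi). rewrite e0 in Hs. rewrite Hsn in Hs.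
      specialize (Htri (f (s i)) w' w). rewrite (Hsym w' w) in Htri. lra.
    + specialize (Hs i Hi). lra.
Qed.

Lemma not_cr_open {X} (d : X -> X -> R) f (Hd : is_metric d) y :
  metric_open d (fun w => ~ chain_rel d f y w).
Proof.
  intros w Hw. apply NNPP. intro Hn. apply Hw. apply cr_closed; auto.
  intros r Hr. apply NNPP. intro H2. apply Hn. exists r. split; auto.
  intros w' Hw' Hc. apply H2. exists w'. auto.
Qed.

Lemma fold_max_ge (l : list nat) i : In i l -> (i <= fold_right Nat.max 0%nat l)%nat.
Proof. induction l; simpl; [tauto|]. intros [->|H]; [lia|]. specialize (IHl H). lia. Qed.

Lemma nested {X} (d : X -> X -> R) f (Hd : is_metric d) (Hcpt : metric_compact d)
  (y : nat -> X) (Hy : forall j, chain_rel d f (y j) (y (S j))) :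
  exists p, forall j, chain_rel d f (y j) p.
Proof.
  assert (Mono : forall i J, (i <= J)%nat -> forall w, chain_rel d f (y J) w -> chain_rel d f (y i) w).
  { intros i J HiJ. induction HiJ; auto. intros w Hw. apply IHHiJ. eapply cr_trans; eauto. }
  apply NNPP. intro Hn.
  destruct (Hcpt nat (fun j w => ~ chain_rel d f (y j) w)) as [l Hl].
  - intro j. apply not_cr_open; auto.
  - intro w. apply NNPP. intro H2. apply Hn. exists w. intro j. apply NNPP. intro H3. apply H2. eauto.
  - set (J := fold_right Nat.max 0%nat l). destruct (Hl (f (y J))) as [i [Hi Hc]].
    apply Hc. apply (Mono i J). apply fold_max_ge; auto. apply cr_step; auto.
Qed.

Lemma test_balls {X} (d : X -> X -> R) (Hd : is_metric d) (Hcpt : metric_compact d) (x0 : X) :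
  exists B : nat -> X -> Prop, forall p r, 0 < r -> exists j, B j p /\ forall w, B j w -> d p w < r.
Proof.
  destruct Hd as [Hpos [H1 [Hsym Htri]]].
  assert (Hc : forall n : nat, exists l : list X, forall x, exists q, In q l /\ d q x < / INR (S n)).
  { intro n. destruct (Hcpt X (fun q x => d q x < / INR (S n))) as [l Hl].
    - intros q x Hx. exists (/ INR (S n) - d q x). split; [lra|].
      intros y Hy. specialize (Htri q x y). lra.
    - intro x. exists x. assert (d x x = 0) by (apply H1; auto).
      assert (0 < / INR (S n)) by (apply Rinv_0_lt_compat, lt_0_INR; lia). lra.
    - exists l. intro x. destruct (Hl x) as [q Hq]. exists q. exact Hq. }
  set (L := fun n => proj1_sig (constructive_indefinite_description _ (Hc n))).
  assert (HL : forall n x, exists q, In q (L n) /\ d q x < / INR (S n)).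
  { intro n. exact (proj2_sig (constructive_indefinite_description _ (Hc n))). }
  exists (fun j => let (n, i) := Cantor.of_nat j in fun w => d (nth i (L n) x0) w < / INR (S n)).
  intros p r Hr. destruct (archimed_cor1 (r/2)) as [N [HN HN0]]; [lra|].
  destruct N as [|n]; [lia|].
  destruct (HL n p) as [q [Hq Hdq]]. destruct (In_nth _ _ x0 Hq) as [i [_ Hi]].
  exists (Cantor.to_nat (n, i)). rewrite Cantor.cancel_of_to. rewrite Hi. split; auto.
  intros w Hw. specialize (Htri p q w). rewrite (Hsym p q) in Htri. lra.
Qed.

Lemma exists_rec {X} (d : X -> X -> R) f (Hd : is_metric d) (Hcpt : metric_compact d) (x0 : X) :
  exists z, chain_rel d f x0 z /\ chain_rel d f z z.
Proof.
  destruct (test_balls d Hd Hcpt x0) as [B HB].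
  set (noB := fun j z => forall w, chain_rel d f z w -> ~ B j w).
  set (P := fun x j z => chain_rel d f x z /\ ((exists z', chain_rel d f x z' /\ noB j z') -> noB j z)).
  assert (HP : forall x j, exists z, P x j z).
  { intros x j. destruct (classic (exists z', chain_rel d f x z' /\ noB j z')) as [[z' Hz']|Hn].
    - exists z'. split; [tauto|]. intros _; tauto.
    - exists (f x). split. apply cr_step; auto. intro; contradiction. }
  set (step := fun x j => epsilon (inhabits x) (P x j)).
  assert (Hstep : forall x j, P x j (step x j)). { intros x j. apply epsilon_spec, HP. }
  set (xs := fix xs (j : nat) : X := match j with O => x0 | S j => step (xs j) j end).
  destruct (nested d f Hd Hcpt xs) as [y Hy].
  { intro j. apply (Hstep (xs j) j). }
  exists (f y). split. { eapply cr_trans. apply (Hy 0%nat). apply cr_step; auto. }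
  assert (Key : forall p, chain_rel d f y p -> chain_rel d f (f y) p).
  { intros p Hp. apply NNPP. intro Hn.
    destruct (not_cr_open d f Hd (f y) p Hn) as [r [Hr Hball]].
    destruct (HB p r Hr) as [j [Hjp Hj]].
    assert (Hz : noB j (f y)). { intros w Hw Hbw. apply (Hball w). apply Hj; auto. auto. }
    destruct (Hstep (xs j) j) as [_ Himp].
    assert (Hnb : noB j (xs (S j))).
    { apply Himp. exists (f y). split; auto. eapply cr_trans. apply Hy. apply cr_step; auto. }
    apply (Hnb p); auto. eapply cr_trans. apply Hy. exact Hp. }
  apply Key. apply cr_step; auto.
Qed.

Theorem theorem3p6 (X : Type) (d : X -> X -> R) (f : X -> X)
  (Hd : is_metric d) (Hcpt : metric_compact d)
  (Cs : nat -> X -> Prop)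
  (HCs : forall k, chain_component d f (Cs k))
  (Hdec : forall k, comp_lt d f (Cs (S k)) (Cs k)) :
  exists C, chain_component d f C /\ forall k, comp_lt d f C (Cs k).
Proof.
  set (a := fun k => proj1_sig (constructive_indefinite_description _ (HCs k))).
  assert (Ha : forall k, chain_recurrent d f (a k) /\
     forall y, Cs k y <-> (chain_recurrent d f y /\ chain_equiv d f (a k) y)).
  { intro k. exact (proj2_sig (constructive_indefinite_description _ (HCs k))). }
  assert (Hadv : forall k, chain_rel d f (a k) (a (S k))).
  { intro k. destruct (Hdec k) as [[u [v [Hu [Hv Hvu]]]] _].
    apply (proj2 (Ha (S k)) u) in Hu. apply (proj2 (Ha k) v) in Hv.
    eapply cr_trans. apply (proj1 (proj2 Hv)). eapply cr_trans. apply Hvu. apply (proj2 (proj2 Hu)). }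
  destruct (nested d f Hd Hcpt a Hadv) as [p Hp].
  destruct (exists_rec d f Hd Hcpt p) as [z [Hpz Hzz]].
  assert (Haz : forall k, chain_rel d f (a k) z) by (intro k; eapply cr_trans; [apply Hp|exact Hpz]).
  exists (fun w => chain_recurrent d f w /\ chain_equiv d f z w). split.
  { exists z. split. exact Hzz. intro y; tauto. }
  intro k. split.
  - exists z, (a k). split. split; auto. split; auto. split.
    apply (proj2 (Ha k)). split. apply (proj1 (Ha k)). split; apply (proj1 (Ha k)).
    apply Haz.
  - intro Heq. destruct (Hdec k) as [_ Hne]. apply Hne.
    assert (Hzk : Cs k z). { rewrite <- Heq. split; auto. split; auto. }
    apply (proj2 (Ha k)) in Hzk. destruct Hzk as [_ [_ Hza]].
    assert (E : chain_equiv d f (a k) (a (S k))).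
    { split; [auto|]. eapply cr_trans; [apply Haz|exact Hza]. }
    apply functional_extensionality. intro w. apply propositional_extensionality.
    rewrite (proj2 (Ha k)), (proj2 (Ha (S k))). unfold chain_equiv in *.
    destruct E as [E1 E2].
    split; intros [Hw [H1 H2]]; split; auto; split.
    + eapply cr_trans; [exact E1|exact H1].
    + eapply cr_trans; [exact H2|exact E2].
    + eapply cr_trans; [exact E2|exact H1].
    + eapply cr_trans; [exact H2|exact E1].
Qed.
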